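(* Let $\mathcal{L}=(\mathrm{Fm},\vdash)$ be a logic and $N\subseteq\mathrm{Fm}\times\mathrm{Fm}$ a normative system, and let $P^c_N=(\mathrm{Fm}\times\mathrm{Fm})\setminus P_N$. 1. If $\bot_P$ and $\top_W$ hold, $P^c_N$ is closed under $(\top)^{\rhd}$ iff $(\top,\psi)\in N$ for some $\psi\in\mathrm{Fm}$. 2. If $\bot_P$ and $\top_W$ hold and $N$ is closed under (WO), then $N$ is closed under $(\top)$ iff $P^c_N$ is closed under $(\top)^{\rhd}$. 3. If $\bot_P$ and $\top_W$ hold, $P^c_N$ is closed under $(\bot)^{\rhd}$ iff $(\bot,\psi)\in N$ for some $\psi$ with $Cn(\psi)=\mathrm{Fm}$. 4. If $\bot_P$ and $\top_W$ hold and $N$ is closed under (WO), then $N$ is closed under $(\bot)$ iff $P^c_N$ is closed under $(\bot)^{\rhd}$. 5. $P^c_N$ is closed under $(\mathrm{WO})^{\rhd}$. 6. If $N$ is closed under (SI), then $P^c_N$ is closed under $(\mathrm{SI})^{\rhd}$. 7. If $\bot_P,\top_P,\neg_I,\neg_A,\neg_P$ hold and $N$ is closed under (WO), then $N$ is closed under (SI) iff $P^c_N$ is closed under $(\mathrm{SI})^{\rhd}$. 8. If $\wedge_P$ and $\vee_S$ hold and $N$ is closed under (AND), then $P^c_N$ is closed under $(\mathrm{AND})^{\rhd}$. 9. If $\bot_P,\top_P,\neg_I,\neg_A,\neg_P$ hold and $N$ is closed under (WO), then $N$ is closed under (AND) iff $P^c_N$ is closed under $(\mathrm{AND})^{\rhd}$.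 10. If $\vee_S$ holds and $N$ is closed under (OR) and (WO), then $P^c_N$ is closed under $(\mathrm{OR})^{\rhd}$. 11. If $\bot_P,\top_P,\neg_I,\neg_A,\neg_P$ hold and $N$ is closed under (WO), then $N$ is closed under (OR) iff $P^c_N$ is closed under $(\mathrm{OR})^{\rhd}$. 12. If $N$ is closed under (CT), then $P^c_N$ is closed under $(\mathrm{CT})^{\rhd}$. 13. If $\bot_P,\top_P,\neg_I,\neg_A,\neg_P$ hold and $N$ is closed under (WO), then $N$ is closed under (CT) iff $P^c_N$ is closed under $(\mathrm{CT})^{\rhd}$.
   Context: A logic $\mathcal{L}=(\mathrm{Fm},\vdash)$: $\mathrm{Fm}$ a formula algebra, $\vdash\subseteq\mathcal{P}(\mathrm{Fm})\times\mathrm{Fm}$ a consequence relation (reflexive, monotone, cut); $Cn(\Gamma)=\{\psi\mid\Gamma\vdash\psi\}$, $Cn(\varphi)=Cn(\{\varphi\})$, $Cn(\Gamma,\varphi)=Cn(\Gamma\cup\{\varphi\})$, $Cn(\varphi,\psi)=Cn(\{\varphi,\psi\})$; $\varphi\vdash\psi$ means $\{\varphi\}\vdash\psi$. Metalogical properties (each asserts existence of a term, then denoted by the symbol): $\wedge_P$: $Cn(\varphi\wedge\psi)=Cn(\{\varphi,\psi\})$; $\vee_P$: $Cn(\varphi\vee\psi)=Cn(\varphi)\cap Cn(\psi)$; $\vee_S$: $Cn(\Gamma,\varphi\vee\psi)=Cn(\Gamma,\varphi)\cap Cn(\Gamma,\psi)$ for all $\Gamma$; $\bot_P$: $Cn(\bot)=\mathrm{Fm}$;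 $\top_W$: $\top\in Cn(\varphi)$ for all $\varphi$; $\top_P$: $Cn(\top)=Cn(\varnothing)$; $\neg_W$: unary $\neg$ with $\psi\in Cn(\varphi)\Rightarrow\neg\varphi\in Cn(\neg\psi)$. For a term $\neg$ with $\neg_W$ (asserting the following includes $\neg_W$): $\neg_I$: $Cn(\neg\neg\varphi)=Cn(\varphi)$; $\neg_A$: $Cn(\varphi,\neg\varphi)=\mathrm{Fm}$; $\neg_P$: $\wedge_P$ holds and $\neg\psi\in Cn(\varphi,\neg(\varphi\wedge\psi))$. Standing convention: a rule mentioning $\wedge,\vee,\top,\bot$ is only considered when the logic has the corresponding property ($\wedge_P$, $\vee_P$, $\top_W$, $\bot_P$) with that term. A normative system is $N\subseteq\mathrm{Fm}\times\mathrm{Fm}$. Closure rules for $N$ (closed under a rule = the conclusion belongs to $N$ whenever the premises do): $(\top)$: $(\top,\top)\in N$; $(\bot)$: $(\bot,\bot)\in N$; (SI): $(\alpha,\varphi)\in N,\ \beta\vdash\alpha\Rightarrow(\beta,\varphi)\in N$; (WO): $(\alpha,\varphi)\in N,\ \varphi\vdash\psi\Rightarrow(\alpha,\psi)\in N$; (AND): $(\alpha,\varphi),(\alpha,\psi)\in N\Rightarrow(\alpha,\varphi\wedge\psi)\in N$; (OR): $(\alpha,\varphi),(\beta,\varphi)\in N\Rightarrow(\alpha\vee\beta,\varphi)\in N$; (CT): $(\alpha,\varphi)\in N,(\alpha\wedge\varphi,\psi)\in N\Rightarrow(\alpha,\psi)\in N$. $P_N=\{(\alpha,\varphi)\mid\forall\psi((\alpha,\psi)\in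 N\Rightarrow Cn(\varphi,\psi)\neq\mathrm{Fm})\}$. Closure rules for a relation $R\subseteq\mathrm{Fm}\times\mathrm{Fm}$ (here $R=P^c_N$): $(\top)^{\rhd}$: $(\top,\bot)\in R$; $(\bot)^{\rhd}$: $(\bot,\top)\in R$; $(\mathrm{SI})^{\rhd}$: $(\beta,\varphi)\in R,\ \alpha\vdash\beta\Rightarrow(\alpha,\varphi)\in R$; $(\mathrm{WO})^{\rhd}$: $(\alpha,\psi)\in R,\ \varphi\vdash\psi\Rightarrow(\alpha,\varphi)\in R$; $(\mathrm{AND})^{\rhd}$: $(\alpha,\varphi),(\alpha,\psi)\in R\Rightarrow(\alpha,\varphi\vee\psi)\in R$; $(\mathrm{OR})^{\rhd}$: $(\alpha,\varphi),(\beta,\varphi)\in R\Rightarrow(\alpha\vee\beta,\varphi)\in R$; $(\mathrm{CT})^{\rhd}$: $(\alpha,\varphi)\in N,\ (\alpha\wedge\varphi,\psi)\in R\Rightarrow(\alpha,\psi)\in R$. *)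

(* Defs.v *)
Set Implicit Arguments.

Section Defs.
Variable Fm : Type.

Definition fset := Fm -> Prop.
Definition set_empty : fset := fun _ => False.
Definition set1 (x : Fm) : fset := fun z => z = x.
Definition set2 (x y : Fm) : fset := fun z => z = x \/ z = y.
Definition setU1 (G : fset) (x : Fm) : fset := fun z => G z \/ z = x.

Variable vdash : fset -> Fm -> Prop.

Definition Cn (G : fset) : fset := fun psi => vdash G psi.
Definition same_Cn (G D : fset) : Prop := forall x, Cn G x <-> Cn D x.
Definition Cn_full (G : fset) : Prop := forall x, Cn G x.

Definition is_logic : Prop :=
  (forall (G : fset) phi, G phi -> vdash G phi) /\
  (forall (G D : fset) phi, (forall x, G x -> D x) -> vdash G phi -> vdash D phi) /\
  (forall (G D : fset) psi, (forall phi, D phi -> vdash G phi) -> vdash D psi -> vdash G psi).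

Definition andP (conj : Fm -> Fm -> Fm) : Prop :=
  forall phi psi, same_Cn (set1 (conj phi psi)) (set2 phi psi).
Definition orP (disj : Fm -> Fm -> Fm) : Prop :=
  forall phi psi x, Cn (set1 (disj phi psi)) x <-> (Cn (set1 phi) x /\ Cn (set1 psi) x).
Definition orS (disj : Fm -> Fm -> Fm) : Prop :=
  forall (G : fset) phi psi x,
    Cn (setU1 G (disj phi psi)) x <-> (Cn (setU1 G phi) x /\ Cn (setU1 G psi) x).
Definition botP (bot : Fm) : Prop := Cn_full (set1 bot).
Definition topW (top : Fm) : Prop := forall phi, Cn (set1 phi) top.
Definition topP (top : Fm) : Prop := same_Cn (set1 top) set_empty.
Definition negW (neg : Fm -> Fm) : Prop :=
  forall phi psi, Cn (set1 phi) psi -> Cn (set1 (neg psi)) (neg phi).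
Definition negI (neg : Fm -> Fm) : Prop :=
  negW neg /\ forall phi, same_Cn (set1 (neg (neg phi))) (set1 phi).
Definition negA (neg : Fm -> Fm) : Prop :=
  negW neg /\ forall phi, Cn_full (set2 phi (neg phi)).
Definition negPP (conj : Fm -> Fm -> Fm) (neg : Fm -> Fm) : Prop :=
  negW neg /\ andP conj /\
  forall phi psi, Cn (set2 phi (neg (conj phi psi))) (neg psi).

Definition nsys := Fm -> Fm -> Prop.

Definition cl_top (top : Fm) (N : nsys) : Prop := N top top.
Definition cl_bot (bot : Fm) (N : nsys) : Prop := N bot bot.
Definition cl_SI (N : nsys) : Prop :=
  forall a b phi, N a phi -> vdash (set1 b) a -> N b phi.
Definition cl_WO (N : nsys) : Prop :=
  forall a phi psi, N a phi -> vdash (set1 phi) psi -> N a psi.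
Definition cl_AND (conj : Fm -> Fm -> Fm) (N : nsys) : Prop :=
  forall a phi psi, N a phi -> N a psi -> N a (conj phi psi).
Definition cl_OR (disj : Fm -> Fm -> Fm) (N : nsys) : Prop :=
  forall a b phi, N a phi -> N b phi -> N (disj a b) phi.
Definition cl_CT (conj : Fm -> Fm -> Fm) (N : nsys) : Prop :=
  forall a phi psi, N a phi -> N (conj a phi) psi -> N a psi.

Definition PN (N : nsys) : nsys :=
  fun a phi => forall psi, N a psi -> ~ Cn_full (set2 phi psi).
Definition PNc (N : nsys) : nsys := fun a phi => ~ PN N a phi.

Definition clR_top (top bot : Fm) (R : nsys) : Prop := R top bot.
Definition clR_bot (bot top : Fm) (R : nsys) : Prop := R bot top.
Definition clR_SI (R : nsys) : Prop :=
  forall a b phi, R b phi -> vdash (set1 a) b -> R a phi.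
Definition clR_WO (R : nsys) : Prop :=
  forall a phi psi, R a psi -> vdash (set1 phi) psi -> R a phi.
Definition clR_AND (disj : Fm -> Fm -> Fm) (R : nsys) : Prop :=
  forall a phi psi, R a phi -> R a psi -> R a (disj phi psi).
Definition clR_OR (disj : Fm -> Fm -> Fm) (R : nsys) : Prop :=
  forall a b phi, R a phi -> R b phi -> R (disj a b) phi.
Definition clR_CT (conj : Fm -> Fm -> Fm) (N R : nsys) : Prop :=
  forall a phi psi, N a phi -> R (conj a phi) psi -> R a psi.

End Defs.

(* Main.v *)
Require Import Defs.
From Stdlib Require Import Classical.

Section H.
Variable Fm : Type.
Variable vdash : fset Fm -> Fm -> Prop.
Hypothesis HL : is_logic vdash.

Lemma refl_ G phi : G phi -> vdash G phi.
Proof. destruct HL as [H _]; auto. Qed.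
Lemma mono_ (G D : fset Fm) phi : (forall x, G x -> D x) -> vdash G phi -> vdash D phi.
Proof. destruct HL as [_ [H _]]; eauto. Qed.
Lemma cut_ (G D : fset Fm) psi : (forall phi, D phi -> vdash G phi) -> vdash D psi -> vdash G psi.
Proof. destruct HL as [_ [_ H]]; eauto. Qed.
Lemma cut1 G a x : vdash G a -> vdash (set1 a) x -> vdash G x.
Proof. intros Ha Hx. apply (cut_ G (set1 a)); auto. intros p Hp; unfold set1 in Hp; subst; auto. Qed.
Lemma cut2 G a b x : vdash G a -> vdash G b -> vdash (set2 a b) x -> vdash G x.
Proof. intros Ha Hb Hx. apply (cut_ G (set2 a b)); auto. intros p [Hp|Hp]; subst; auto. Qed.
Lemma ext_ (G D : fset Fm) x : (forall z, G z <-> D z) -> vdash G x -> vdash D x.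
Proof. intros H. apply mono_. intros z; apply H. Qed.
Lemma in1 a : vdash (set1 a) a.
Proof. apply refl_. reflexivity. Qed.
Lemma in2l a b : vdash (set2 a b) a.
Proof. apply refl_. left; reflexivity. Qed.
Lemma in2r a b : vdash (set2 a b) b.
Proof. apply refl_. right; reflexivity. Qed.
Lemma set2C a b x : vdash (set2 a b) x -> vdash (set2 b a) x.
Proof. apply ext_. unfold set2; intuition. Qed.
Lemma set1_2 a b x : vdash (set1 a) x -> vdash (set2 a b) x.
Proof. apply mono_. unfold set1, set2; intuition. Qed.

Lemma PNc_iff (N : nsys Fm) a phi :
  PNc vdash N a phi <-> exists psi, N a psi /\ Cn_full vdash (set2 phi psi).
Proof.
  unfold PNc, PN. split.
  - intros H. apply NNPP. intros H2. apply H. intros psi Hn Hf. apply H2. eauto.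
  - intros [psi [Hn Hf]] H. exact (H psi Hn Hf).
Qed.

Lemma full_cut G a b : vdash G a -> vdash G b -> Cn_full vdash (set2 a b) -> Cn_full vdash G.
Proof. intros Ha Hb Hf x. apply (cut2 G a b); auto. apply Hf. Qed.

Lemma part5 N : clR_WO vdash (PNc vdash N).
Proof.
  intros a phi psi H Hd. apply PNc_iff in H as [chi [Hn Hf]]. apply PNc_iff.
  exists chi; split; auto. apply (full_cut _ psi chi); auto.
  - eapply cut1. apply in2l. auto.
  - apply in2r.
Qed.

Section Neg.
Variables (top : Fm) (neg : Fm -> Fm) (conj : Fm -> Fm -> Fm).
Hypotheses (Htop : topP vdash top) (HnI : negI vdash neg) (HnA : negA vdash neg)
  (HnP : negPP vdash conj neg).

Lemma nn_intro phi : vdash (set1 phi) (neg (neg phi)).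
Proof. destruct HnI as [_ H]. apply (H phi). apply in1. Qed.
Lemma nn_elim phi : vdash (set1 (neg (neg phi))) phi.
Proof. destruct HnI as [_ H]. apply (H phi). apply in1. Qed.
Lemma contra phi psi : vdash (set1 phi) psi -> vdash (set1 (neg psi)) (neg phi).
Proof. destruct HnI as [H _]. apply H. Qed.
Lemma and_el p q : vdash (set1 (conj p q)) p.
Proof. destruct HnP as [_ [H _]]. apply (H p q). apply in2l. Qed.
Lemma and_er p q : vdash (set1 (conj p q)) q.
Proof. destruct HnP as [_ [H _]]. apply (H p q). apply in2r. Qed.
Lemma and_i p q : vdash (set2 p q) (conj p q).
Proof. destruct HnP as [_ [H _]]. apply (H p q). apply in1. Qed.

Lemma keyL phi chi : Cn_full vdash (set2 (neg phi) chi) -> vdash (set1 chi) phi.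
Proof.
  intros Hf. set (c := conj chi (neg phi)).
  assert (Hc : vdash (set1 c) (neg top)).
  { apply (cut2 _ chi (neg phi)). apply and_el. apply and_er. apply set2C, Hf. }
  apply contra in Hc.
  assert (H1 : vdash (set1 top) (neg c)).
  { destruct HnI as [_ H]. apply (H top). exact Hc. }
  assert (H2 : vdash (set1 chi) (neg c)).
  { apply Htop in H1. eapply mono_; [|exact H1]. intros x [] . }
  assert (H3 : vdash (set1 chi) (neg (neg phi))).
  { apply (cut2 _ chi (neg c)). apply in1. exact H2. destruct HnP as [_ [_ H]]. apply H. }
  eapply cut1. exact H3. apply nn_elim.
Qed.

Lemma keyR phi chi : vdash (set1 chi) phi -> Cn_full vdash (set2 (neg phi) chi).
Proof.
  intros H. apply (full_cut _ phi (neg phi)).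
  - eapply cut1. apply in2r. auto.
  - apply in2l.
  - destruct HnA as [_ Ha]. apply Ha.
Qed.

Lemma key N a phi : cl_WO vdash N -> (PNc vdash N a (neg phi) <-> N a phi).
Proof.
  intros Hwo. rewrite PNc_iff. split.
  - intros [chi [Hn Hf]]. eapply Hwo. exact Hn. apply keyL. auto.
  - intros Hn. exists phi. split; auto. apply keyR. apply in1.
Qed.

Lemma key2 N a phi : cl_WO vdash N -> (PNc vdash N a phi <-> N a (neg phi)).
Proof.
  intros Hwo. rewrite <- (key N a (neg phi) Hwo). split; intros H; eapply part5; eauto.
  - apply nn_elim.
  - apply nn_intro.
Qed.
End Neg.

Lemma orP_il disj p q : orP vdash disj -> vdash (set1 p) (disj p q).
Proof. intros H. apply (H p q). apply in1; auto. Qed.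
Lemma orP_ir disj p q : orP vdash disj -> vdash (set1 q) (disj p q).
Proof. intros H. apply (H p q). apply in1; auto. Qed.
Lemma orP_e disj p q x : orP vdash disj -> vdash (set1 p) x -> vdash (set1 q) x -> vdash (set1 (disj p q)) x.
Proof. intros H H1 H2. apply (H p q). split; auto. Qed.

Lemma orS_il disj p q : orS vdash disj -> vdash (set1 p) (disj p q).
Proof.
  intros H. assert (H1 := proj1 (H (@set_empty Fm) p q (disj p q))).
  destruct H1 as [H1 _]. apply refl_; auto. right; reflexivity.
  revert H1. apply mono_; auto. unfold setU1, set_empty, set1. intros x [[]|E]; exact E.
Qed.
Lemma orS_ir disj p q : orS vdash disj -> vdash (set1 q) (disj p q).
Proof.
  intros H. assert (H1 := proj1 (H (@set_empty Fm) p q (disj p q))).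
  destruct H1 as [_ H1]. apply refl_; auto. right; reflexivity.
  revert H1. apply mono_; auto. unfold setU1, set_empty, set1. intros x [[]|E]; exact E.
Qed.
Lemma orS_full disj g p q : orS vdash disj ->
  Cn_full vdash (setU1 (set1 g) p) -> Cn_full vdash (setU1 (set1 g) q) ->
  Cn_full vdash (setU1 (set1 g) (disj p q)).
Proof. intros H H1 H2 x. apply H. split; [apply H1|apply H2]. Qed.
Lemma U1_2 g p x : vdash (setU1 (set1 g) p) x <-> vdash (set2 p g) x.
Proof. split; apply ext_; unfold setU1, set1, set2; intuition auto. Qed.
Lemma main_aux (N : nsys Fm) :
  (forall bot top : Fm, botP vdash bot -> topW vdash top ->
     (clR_top top bot (PNc vdash N) <-> exists psi, N top psi)) /\
  (forall bot top : Fm, botP vdash bot -> topW vdash top -> cl_WO vdash N ->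
     (cl_top top N <-> clR_top top bot (PNc vdash N))) /\
  (forall bot top : Fm, botP vdash bot -> topW vdash top ->
     (clR_bot bot top (PNc vdash N) <->
      exists psi, N bot psi /\ Cn_full vdash (set1 psi))) /\
  (forall bot top : Fm, botP vdash bot -> topW vdash top -> cl_WO vdash N ->
     (cl_bot bot N <-> clR_bot bot top (PNc vdash N))) /\
  clR_WO vdash (PNc vdash N) /\
  (cl_SI vdash N -> clR_SI vdash (PNc vdash N)) /\
  (forall (bot top : Fm) (neg : Fm -> Fm) (conj : Fm -> Fm -> Fm),
     botP vdash bot -> topP vdash top -> negI vdash neg -> negA vdash neg ->
     negPP vdash conj neg -> cl_WO vdash N ->
     (cl_SI vdash N <-> clR_SI vdash (PNc vdash N))) /\
  (forall conj disj : Fm -> Fm -> Fm,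
     andP vdash conj -> orS vdash disj -> cl_AND conj N ->
     clR_AND disj (PNc vdash N)) /\
  (forall (bot top : Fm) (neg : Fm -> Fm) (conj disj : Fm -> Fm -> Fm),
     botP vdash bot -> topP vdash top -> negI vdash neg -> negA vdash neg ->
     negPP vdash conj neg -> orP vdash disj -> cl_WO vdash N ->
     (cl_AND conj N <-> clR_AND disj (PNc vdash N))) /\
  (forall disj : Fm -> Fm -> Fm,
     orS vdash disj -> cl_OR disj N -> cl_WO vdash N ->
     clR_OR disj (PNc vdash N)) /\
  (forall (bot top : Fm) (neg : Fm -> Fm) (conj disj : Fm -> Fm -> Fm),
     botP vdash bot -> topP vdash top -> negI vdash neg -> negA vdash neg ->
     negPP vdash conj neg -> orP vdash disj -> cl_WO vdash N ->
     (cl_OR disj N <-> clR_OR disj (PNc vdash N))) /\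
  (forall conj : Fm -> Fm -> Fm,
     andP vdash conj -> cl_CT conj N -> clR_CT conj N (PNc vdash N)) /\
  (forall (bot top : Fm) (neg : Fm -> Fm) (conj : Fm -> Fm -> Fm),
     botP vdash bot -> topP vdash top -> negI vdash neg -> negA vdash neg ->
     negPP vdash conj neg -> cl_WO vdash N ->
     (cl_CT conj N <-> clR_CT conj N (PNc vdash N))).
Proof.
  assert (P1 : forall bot top : Fm, botP vdash bot -> topW vdash top ->
     (clR_top top bot (PNc vdash N) <-> exists psi, N top psi)).
  { intros bot top Hb Ht. unfold clR_top. rewrite PNc_iff by auto. split.
    - intros [psi [H _]]; eauto.
    - intros [psi H]. exists psi; split; auto. intros x. apply set1_2; auto; apply Hb. }
  assert (P3 : forall bot top : Fm, botP vdash bot -> topW vdash top ->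
     (clR_bot bot top (PNc vdash N) <->
      exists psi, N bot psi /\ Cn_full vdash (set1 psi))).
  { intros bot top Hb Ht. unfold clR_bot. rewrite PNc_iff by auto. split.
    - intros [psi [H Hf]]. exists psi; split; auto.
      apply (full_cut _ top psi); auto. apply Ht. apply in1; auto.
    - intros [psi [H Hf]]. exists psi; split; auto. intros x.
      apply set2C; auto. apply set1_2; apply Hf. }
  assert (P5 := part5 N).
  assert (P6 : cl_SI vdash N -> clR_SI vdash (PNc vdash N)).
  { intros Hsi a b phi H Hab. rewrite PNc_iff in * by auto.
    destruct H as [chi [Hn Hf]]. exists chi; split; eauto. }
  assert (P12 : forall conj : Fm -> Fm -> Fm,
     andP vdash conj -> cl_CT conj N -> clR_CT conj N (PNc vdash N)).
  { intros conj Ha Hct a phi psi Hn H. rewrite PNc_iff in * by auto.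
    destruct H as [chi [Hn2 Hf]]. exists chi; split; eauto. }
  split; [exact P1|]. split.
  { intros bot top Hb Ht Hwo. rewrite (P1 bot top Hb Ht). unfold cl_top. split.
    - eauto.
    - intros [psi H]. eapply Hwo; eauto. apply Ht. }
  split; [exact P3|]. split.
  { intros bot top Hb Ht Hwo. rewrite (P3 bot top Hb Ht). unfold cl_bot. split.
    - intros H. exists bot; split; auto.
    - intros [psi [H Hf]]. eapply Hwo; eauto. apply Hf. }
  split; [exact P5|]. split; [exact P6|]. split.
  { intros bot top neg conj Hb Ht HnI HnA HnP Hwo. split; [exact P6|].
    intros H a b phi Hn Hba.
    apply (key top neg conj Ht HnI HnA HnP N b phi Hwo).
    eapply H; eauto. apply (key top neg conj Ht HnI HnA HnP N a phi Hwo); auto. }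
  split.
  { intros conj disj Ha Ho Hand a phi psi H1 H2. rewrite PNc_iff in * by auto.
    destruct H1 as [c1 [Hn1 Hf1]]. destruct H2 as [c2 [Hn2 Hf2]].
    exists (conj c1 c2). split; auto.
    intros x. apply U1_2. revert x. apply (orS_full disj); [exact Ho| |].
    - intros x. apply U1_2. eapply cut2; auto. apply in2l; auto.
      eapply cut1; auto. apply in2r; auto. apply (Ha c1 c2). apply in2l; auto. apply Hf1.
    - intros x. apply U1_2. eapply cut2; auto. apply in2l; auto.
      eapply cut1; auto. apply in2r; auto. apply (Ha c1 c2). apply in2r; auto. apply Hf2. }
  split.
  { intros bot top neg conj disj Hb Ht HnI HnA HnP Ho Hwo.
    assert (K := fun a phi => key top neg conj Ht HnI HnA HnP N a phi Hwo).
    assert (K2 := fun a phi => key2 top neg conj Ht HnI HnA HnP N a phi Hwo).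
    split.
    - intros Hand a phi psi H1 H2. apply K2. apply K2 in H1, H2.
      apply (Hwo a (conj (neg phi) (neg psi))). apply Hand; auto.
      set (c := conj (neg phi) (neg psi)).
      assert (A : vdash (set1 (disj phi psi)) (neg c)).
      { apply orP_e; auto.
        - apply (cut1 _ (neg (neg phi))). eapply nn_intro; eauto. eapply contra; eauto. eapply and_el; eauto.
        - apply (cut1 _ (neg (neg psi))). eapply nn_intro; eauto. eapply contra; eauto. eapply and_er; eauto. }
      eapply contra in A; eauto. apply (cut1 _ (neg (neg c))). eapply nn_intro; eauto. exact A.
    - intros H a phi psi H1 H2. apply K. apply K in H1, H2.
      apply (P5 a _ (disj (neg phi) (neg psi))). apply H; auto.
      set (d := disj (neg phi) (neg psi)).
      assert (A : vdash (set1 (neg d)) (conj phi psi)).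
      { eapply cut2; auto.
        - apply (cut1 _ (neg (neg phi))). eapply contra; eauto. eapply orP_il; eauto. eapply nn_elim; eauto.
        - apply (cut1 _ (neg (neg psi))). eapply contra; eauto. eapply orP_ir; eauto. eapply nn_elim; eauto.
        - eapply and_i; eauto. }
      eapply contra in A; eauto. apply (cut1 _ (neg (neg d))). exact A. eapply nn_elim; eauto. }
  split.
  { intros disj Ho Hor Hwo a b phi H1 H2. rewrite PNc_iff in * by auto.
    destruct H1 as [c1 [Hn1 Hf1]]. destruct H2 as [c2 [Hn2 Hf2]].
    exists (disj c1 c2). split.
    - apply Hor; eapply Hwo; eauto. apply orS_il; auto. apply orS_ir; auto.
    - intros x. apply set2C; auto. apply U1_2. revert x. apply (orS_full disj); [exact Ho| |].
      + intros x. apply U1_2. apply set2C; auto. apply Hf1.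
      + intros x. apply U1_2. apply set2C; auto. apply Hf2. }
  split.
  { intros bot top neg conj disj Hb Ht HnI HnA HnP Ho Hwo.
    assert (K := fun a phi => key top neg conj Ht HnI HnA HnP N a phi Hwo).
    assert (K2 := fun a phi => key2 top neg conj Ht HnI HnA HnP N a phi Hwo).
    split.
    - intros Hor a b phi H1 H2. apply K2. apply K2 in H1, H2. auto.
    - intros H a b phi H1 H2. apply K. apply K in H1, H2. auto. }
  split; [exact P12|].
  { intros bot top neg conj Hb Ht HnI HnA HnP Hwo.
    assert (K := fun a phi => key top neg conj Ht HnI HnA HnP N a phi Hwo).
    split.
    - apply P12. destruct HnP as [_ [H _]]; exact H.
    - intros H a phi psi H1 H2. apply K. eapply H; eauto. apply K; auto. }
Qed.

End H.

Theorem proposition4p5 (Fm : Type) (vdash : fset Fm -> Fm -> Prop)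
  (HL : is_logic vdash) (N : nsys Fm) :
  (* 1 *)
  (forall bot top : Fm, botP vdash bot -> topW vdash top ->
     (clR_top top bot (PNc vdash N) <-> exists psi, N top psi)) /\
  (* 2 *)
  (forall bot top : Fm, botP vdash bot -> topW vdash top -> cl_WO vdash N ->
     (cl_top top N <-> clR_top top bot (PNc vdash N))) /\
  (* 3 *)
  (forall bot top : Fm, botP vdash bot -> topW vdash top ->
     (clR_bot bot top (PNc vdash N) <->
      exists psi, N bot psi /\ Cn_full vdash (set1 psi))) /\
  (* 4 *)
  (forall bot top : Fm, botP vdash bot -> topW vdash top -> cl_WO vdash N ->
     (cl_bot bot N <-> clR_bot bot top (PNc vdash N))) /\
  (* 5 *)
  clR_WO vdash (PNc vdash N) /\
  (* 6 *)
  (cl_SI vdash N -> clR_SI vdash (PNc vdash N)) /\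
  (* 7 *)
  (forall (bot top : Fm) (neg : Fm -> Fm) (conj : Fm -> Fm -> Fm),
     botP vdash bot -> topP vdash top -> negI vdash neg -> negA vdash neg ->
     negPP vdash conj neg -> cl_WO vdash N ->
     (cl_SI vdash N <-> clR_SI vdash (PNc vdash N))) /\
  (* 8 *)
  (forall conj disj : Fm -> Fm -> Fm,
     andP vdash conj -> orS vdash disj -> cl_AND conj N ->
     clR_AND disj (PNc vdash N)) /\
  (* 9 *)
  (forall (bot top : Fm) (neg : Fm -> Fm) (conj disj : Fm -> Fm -> Fm),
     botP vdash bot -> topP vdash top -> negI vdash neg -> negA vdash neg ->
     negPP vdash conj neg -> orP vdash disj -> cl_WO vdash N ->
     (cl_AND conj N <-> clR_AND disj (PNc vdash N))) /\
  (* 10 *)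
  (forall disj : Fm -> Fm -> Fm,
     orS vdash disj -> cl_OR disj N -> cl_WO vdash N ->
     clR_OR disj (PNc vdash N)) /\
  (* 11 *)
  (forall (bot top : Fm) (neg : Fm -> Fm) (conj disj : Fm -> Fm -> Fm),
     botP vdash bot -> topP vdash top -> negI vdash neg -> negA vdash neg ->
     negPP vdash conj neg -> orP vdash disj -> cl_WO vdash N ->
     (cl_OR disj N <-> clR_OR disj (PNc vdash N))) /\
  (* 12 *)
  (forall conj : Fm -> Fm -> Fm,
     andP vdash conj -> cl_CT conj N -> clR_CT conj N (PNc vdash N)) /\
  (* 13 *)
  (forall (bot top : Fm) (neg : Fm -> Fm) (conj : Fm -> Fm -> Fm),
     botP vdash bot -> topP vdash top -> negI vdash neg -> negA vdash neg ->
     negPP vdash conj neg -> cl_WO vdash N ->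
     (cl_CT conj N <-> clR_CT conj N (PNc vdash N))).
Proof. exact (main_aux Fm vdash HL N). Qed.
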